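(* Let designer $j$ have a participation objective with threshold $\theta_j\in[0,1]$ and budget $T_j>0$, and fix arbitrary prize structures for the other designers. Then the maximum of $\hat R_j(x_{\vec w_j},x_{-j}^{-1},\theta_j)$ over feasible prize structures $\vec w_j$ is attained by a simple contest $\vec w_j^{(k^*,T_j)}$ for some $k^*\in[n]$. Moreover, letting $\phi^*:=\Phi_j^*(\theta_j;x_{\vec w_j^{(k^*,T_j)}},x_{-j}^{-1})$, this $k^*$ satisfies $k^*\in\arg\max_{k\in[n]}\xi_k(\phi^* )$.
   Context: Model. There are $m\ge1$ contests/designers with budgets $T_j$, and $n\ge2$ contestants. Prize structures. A feasible prize structure is $\vec w_j$ with $w_{j,1}\ge\dots\ge w_{j,n}\ge0$ and $\sum_kw_{j,k}\le T_j$. Contestants. Contestant quantiles $q_i$ are i.i.d. $U[0,1]$ with skill $v(q_i)$, where $v$ is strictly decreasing. Contestants choose a contest and an effort; they are ranked by effort within the contest, the rank-$k$ participant gets $w_{j,k}$, and utility is skill times prize minus effort. Interim allocation function. $x_{\vec w_j}(\phi)=x_j(\phi)=\sum_kw_{j,k}\binom{n-1}{k-1}\phi^{k-1}(1-\phi)^{n-k}$. Inverse notation. $x_j^{-1}(y):=\max\{\phi\in[0,1]:x_j(\phi)\ge y\}$ (and $0$ if $x_j(0)<y$); $x_{-j}^{-1}:=\sum_{j'\ne j}x_{j'}^{-1}$; $Q:=x_j^{-1}+x_{-j}^{-1}$; $Q^{-1}(q):=\sup\{y:Q(y)\ge q\}$. Selected equilibrium participation. $\Phi_j^*(q;x_j,x_{-j}^{-1})$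 is the probability that a contestant has quantile $\le q$ and enters contest $j$. - It equals $x_j^{-1}(Q^{-1}(q))$ when $x_j$ is strictly decreasing. - When several contests have identical constant interim allocation functions with the maximal constant value, participants are divided equally among them. Precisely: if $M_1^*$ is that set, $x^*$ the common value, and $q^*=\min\{1,\sum_{j'\text{ strictly decreasing}}x_{j'}^{-1}(x^* )\}$, then each $j\in M_1^*$ has $\Phi_j^*(q)=\max\{0,q-q^*\}/|M_1^*|$. - Constant contests with smaller value get $\Phi_j^*\equiv0$. Participation objective. $\hat R_j(x_j,x_{-j}^{-1},\theta_j)=n\,\Phi_j^*(\theta_j;x_j,x_{-j}^{-1})$, the expected number of participants in contest $j$ with quantile $\le\theta_j$. Simple contests. $\vec w_j^{(k,T)}$ gives $T/k$ to each of ranks $1,\dots,k$ and $0$ to the rest. $\xi_k(\phi):=x_{\vec w^{(k,1)}}(\phi)=\frac1k\sum_{l=1}^k\binom{n-1}{l-1}\phi^{l-1}(1-\phi)^{n-l}$. *)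

(* Defs.v *)
From HB Require Import structures.
From mathcomp Require Import all_boot all_order all_algebra.
From mathcomp Require Import all_classical all_reals all_analysis.
Set Implicit Arguments. Unset Strict Implicit. Unset Printing Implicit Defensive.
Import Order.TTheory GRing.Theory Num.Theory.
Local Open Scope ring_scope.

Local Open Scope classical_set_scope.
Local Open Scope ereal_scope.

(* Feasible prize structure w : ranks 1..n (encoded as 'I_n, rank = i+1):
   w_1 >= ... >= w_n >= 0 and sum <= T. *)
Definition feasible (R : realType) (n : nat) (T : R) (w : 'I_n -> R) : Prop :=
  (forall i k : 'I_n, (i <= k)%N -> w k <= w i)%R /\
  (forall i : 'I_n, 0 <= w i)%R /\ (\sum_(i < n) w i <= T)%R.

(* Interim allocation function x_w(phi)
   = sum_k w_k C(n-1,k-1) phi^(k-1) (1-phi)^(n-k), with k = i+1. *)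
Definition xalloc (R : realType) (n : nat) (w : 'I_n -> R) (phi : R) : R :=
  (\sum_(i < n) w i * ('C(n.-1, i))%:R * phi ^+ i * (1 - phi) ^+ (n.-1 - i))%R.

Definition simple (R : realType) (n : nat) (T : R) (k : nat) : 'I_n -> R :=
  fun i => if (i < k)%N then (T / k%:R)%R else 0%R.

Definition xi (R : realType) (n : nat) (k : nat) : R -> R :=
  xalloc (@simple R n 1%R k).

(* x^{-1}(y) := max{phi in [0,1] : x(phi) >= y}, and 0 if x(0) < y.
   The argument y is an extended real (needed since Q^{-1}(0) = +oo).
   The max is written as the sup of the (closed, nonempty) set. *)
Definition xinv (R : realType) (x : R -> R) (y : \bar R) : R :=
  if (x 0%R)%:E < y then 0%R
  else sup [set phi : R | (0 <= phi <= 1)%R /\ y <= (x phi)%:E].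

Definition sdec (R : realType) (f : R -> R) : Prop :=
  forall a b : R, (0 <= a)%R -> (a < b)%R -> (b <= 1)%R -> (f b < f a)%R.

Definition Qfun (R : realType) (m n : nat) (W : 'I_m -> 'I_n -> R) (y : R) : R :=
  (\sum_(j' < m) xinv (xalloc (W j')) y%:E)%R.

Definition Qinv (R : realType) (m n : nat) (W : 'I_m -> 'I_n -> R) (q : R) : \bar R :=
  ereal_sup [set y%:E | y in [set y : R | (q <= Qfun W y)%R]].

Definition Phi (R : realType) (m n : nat) (W : 'I_m -> 'I_n -> R) (j : 'I_m) (q : R) : R :=
  if `[< sdec (xalloc (W j)) >] then xinv (xalloc (W j)) (Qinv W q)
  else
    let c := fun j' => xalloc (W j') 0%R in
    let inM1 := fun j' : 'I_m =>
      ~~ `[< sdec (xalloc (W j')) >] &&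
      `[< forall j'' : 'I_m, ~ sdec (xalloc (W j'')) -> (c j'' <= c j')%R >] in
    if inM1 j then
      let qs := Num.min 1%R
        (\sum_(j' < m | `[< sdec (xalloc (W j')) >]) xinv (xalloc (W j')) (c j)%:E)%R in
      (Num.max 0 (q - qs) / (#|[pred j' : 'I_m | inM1 j']|)%:R)%R
    else 0%R.

Definition upd (R : realType) (m n : nat) (W : 'I_m -> 'I_n -> R) (j : 'I_m)
  (w : 'I_n -> R) : 'I_m -> 'I_n -> R :=
  fun j' => if j' == j then w else W j'.

Definition Rhat (R : realType) (m n : nat) (W : 'I_m -> 'I_n -> R) (j : 'I_m) (theta : R) : R :=
  (n%:R * Phi W j theta)%R.
Arguments simple {R} n T k _.
Arguments xi {R} n k _.

(* Main.v *)
Require Import Defs.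
From HB Require Import structures.
From mathcomp Require Import all_boot all_order all_algebra.
From mathcomp Require Import all_classical all_reals all_analysis.
From mathcomp.algebra_tactics Require Import ring lra.
Import Order.TTheory GRing.Theory Num.Theory.
Import numFieldNormedType.Exports.
Local Open Scope classical_set_scope.
Local Open Scope ring_scope.
Section PA.
Variable R : realType.

Definition bern (N i : nat) (p : R) : R := ('C(N, i))%:R * p ^+ i * (1 - p) ^+ (N - i).
Definition G (N r : nat) (p : R) : R := \sum_(i < r) bern N i p.

Lemma bern_ge0 N i p : 0 <= p <= 1 -> 0 <= bern N i p.
Proof.
move=> /andP[p0 p1]; rewrite /bern; apply: mulr_ge0; [apply: mulr_ge0|].
- exact: ler0n.
- exact: exprn_ge0.
- by apply: exprn_ge0; rewrite subr_ge0.
Qed.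

Lemma bern_rec N i p : bern N.+1 i.+1 p = (1 - p) * bern N i.+1 p + p * bern N i p.
Proof.
rewrite /bern binS subSS natrD.
case: (ltnP i N) => iN.
  have -> : (N - i = (N - i.+1).+1)%N by rewrite subnSK.
  rewrite !exprS; ring.
rewrite bin_small ?ltnS // (_ : N - i = 0)%N; last by apply/eqP; rewrite subn_eq0.
rewrite !expr0 exprS; ring.
Qed.

Lemma G_rec N r p : G N.+1 r.+1 p = (1 - p) * G N r.+1 p + p * G N r p.
Proof.
rewrite /G big_ord_recl [X in _ = _ * X + _]big_ord_recl.
have -> : bern N.+1 0 p = (1 - p) * bern N 0 p by rewrite /bern !bin0 !subn0 exprS; ring.
under eq_bigr do rewrite /bump /= bern_rec.
rewrite big_split /= -!mulr_sumr; ring.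
Qed.

Lemma G_S N r p : G N r.+1 p = G N r p + bern N r p.
Proof. by rewrite /G big_ord_recr. Qed.

Lemma G_full N p : G N N.+1 p = 1.
Proof.
elim: N => [|N IH]; first by rewrite /G big_ord1 /bern bin0 subnn !expr0 !mulr1.
rewrite G_rec IH G_S IH /bern bin_small //; ring.
Qed.

Lemma G0_const r a b : G 0 r a = G 0 r b.
Proof. by apply: eq_bigr => -[[|k] ?] _; rewrite /bern bin0n /= ?mul0r // !expr0. Qed.

Lemma G_decr N r a b : 0 <= a -> a <= b -> b <= 1 -> G N r b <= G N r a.
Proof.
move=> a0 ab b1; elim: N r => [|N IH] r; first by rewrite (G0_const r b a).
case: r => [|r]; first by rewrite /G !big_ord0.
rewrite !G_rec.
have h1 := IH r.+1; have h2 := IH r.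
have h3 : G N r a <= G N r.+1 a.
  by rewrite G_S lerDl bern_ge0 // a0 (le_trans ab b1).
have e1 : 0 <= (1 - b) * (G N r.+1 a - G N r.+1 b) by apply: mulr_ge0; lra.
have e2 : 0 <= b * (G N r a - G N r b) by apply: mulr_ge0; lra.
have e3 : 0 <= (b - a) * (G N r.+1 a - G N r a) by apply: mulr_ge0; lra.
lra.
Qed.

Lemma G_strict N r a b : (1 <= r <= N)%N -> 0 <= a -> a < b -> b <= 1 -> G N r b < G N r a.
Proof.
move=> + a0 ab b1; elim: N r => [|N IH] r; first by case: r => [|r].
case: r => [//|r] /andP[_ rN]; rewrite ltnS in rN.
rewrite !G_rec.
have h1 := G_decr N r.+1 a b a0 (ltW ab) b1; have h2 := G_decr N r a b a0 (ltW ab) b1.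
have h3 : G N r a <= G N r.+1 a.
  by rewrite G_S lerDl bern_ge0 // a0 (le_trans (ltW ab) b1).
have e1 : 0 <= (1 - b) * (G N r.+1 a - G N r.+1 b) by apply: mulr_ge0; lra.
have e2 : 0 <= b * (G N r a - G N r b) by apply: mulr_ge0; lra.
have e3 : 0 <= (b - a) * (G N r.+1 a - G N r a) by apply: mulr_ge0; lra.
have [a0'|] := boolP ((0 < a) || (r == 0)%N).
  have e4 : 0 < (b - a) * (G N r.+1 a - G N r a).
    apply: mulr_gt0; first lra.
    rewrite G_S addrAC subrr add0r /bern; apply: mulr_gt0; [apply: mulr_gt0|].
    - by rewrite ltr0n bin_gt0.
    - case/orP: a0' => [|/eqP->]; [exact: exprn_gt0|by rewrite expr0].
    - by apply: exprn_gt0; lra.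
  lra.
rewrite negb_or -leNgt => /andP[a0'' r0].
have hs := IH r; rewrite lt0n r0 rN /= in hs.
have e4 : 0 < b * (G N r a - G N r b) by apply: mulr_gt0; [lra| move: (hs isT); lra].
lra.
Qed.

Lemma abel (w D : nat -> R) N :
  \sum_(i < N.+1) w i * D i =
  \sum_(k < N) (w k - w k.+1) * (\sum_(i < k.+1) D i) + w N * \sum_(i < N.+1) D i.
Proof.
elim: N => [|N IH]; first by rewrite big_ord0 big_ord1 add0r big_ord1.
rewrite big_ord_recr /= IH.
rewrite [in RHS]big_ord_recr /=.
rewrite [\sum_(i < N.+2) D i]big_ord_recr /=.
ring.
Qed.

Lemma drop_exists (f : nat -> R) i : f i < f 0%N -> exists2 k, (k < i)%N & f k.+1 < f k.
Proof.
elim: i => [|i IH]; first by rewrite ltxx.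
move=> h; have [hi|hi] := ltP (f i) (f 0%N).
  by have [k ki fk] := IH hi; exists k => //; rewrite ltnS ltnW.
by exists i => //; apply: lt_le_trans h hi.
Qed.

End PA.
Arguments bern {R}. Arguments G {R}. Arguments abel {R}. Arguments drop_exists {R}.
Arguments G_decr {R}. Arguments G_strict {R}. Arguments G_full {R}. Arguments G_S {R}.
Arguments bern_ge0 {R}.
Section PC.
Variable R : realType.
Variable N : nat.
Implicit Types (w : 'I_N.+1 -> R) (p : R).

Definition nonincr w := forall i k : 'I_N.+1, (i <= k)%N -> w k <= w i.
Definition wn w (k : nat) : R := w (inord k).

Lemma xalloc_wn w p : xalloc w p = \sum_(i < N.+1) wn w i * bern N i p.
Proof. by apply: eq_bigr => i _; rewrite /wn inord_val /bern !mulrA. Qed.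

Lemma sum_wn w : \sum_(i < N.+1) w i = \sum_(i < N.+1) wn w i * 1.
Proof. by apply: eq_bigr => i _; rewrite /wn inord_val mulr1. Qed.

Lemma wn_nonincr w : nonincr w -> forall i k, (i <= k)%N -> (k <= N)%N -> wn w k <= wn w i.
Proof.
move=> H i k ik kN; apply: H.
have iN : (i < N.+1)%N by rewrite ltnS (leq_trans ik kN).
have kN' : (k < N.+1)%N by rewrite ltnS.
by rewrite !inordK.
Qed.

Lemma simple_x (T : R) k p : (k <= N.+1)%N ->
  xalloc (simple N.+1 T k) p = T / k%:R * G N k p.
Proof.
move=> kN; rewrite /xalloc /G (big_ord_widen N.+1 (fun i => bern N i p) kN) mulr_sumr [in RHS]big_mkcond /=.
apply: eq_bigr => i _; rewrite /simple; case: ifP => _; last by rewrite !mul0r.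
by rewrite /bern !mulrA.
Qed.

Lemma xi_G k p : (k <= N.+1)%N -> xi N.+1 k p = k%:R^-1 * G N k p.
Proof. by move=> kN; rewrite /xi simple_x // div1r. Qed.

Lemma x_const w c : (forall i, w i = c) -> forall p, xalloc w p = c.
Proof.
move=> H p; rewrite /xalloc.
have -> : c = c * G N N.+1 p by rewrite G_full mulr1.
rewrite /G mulr_sumr; apply: eq_bigr => i _; by rewrite H /bern !mulrA.
Qed.

Lemma x_cont w : continuous (xalloc w).
Proof.
have -> : xalloc w = horner (\sum_(i < N.+1) ((w i * ('C(N,i))%:R)%:P * 'X^i * (1 - 'X)^+(N - i))).
  apply: funext => p; rewrite horner_sum; apply: eq_bigr => i _; rewrite !hornerE //.
exact: continuous_horner.
Qed.

Lemma sum_lt_one M (F H : 'I_M -> R) i0 : (forall i, F i <= H i) -> F i0 < H i0 ->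
  \sum_(i < M) F i < \sum_(i < M) H i.
Proof.
move=> le lt; rewrite (bigD1 i0) //= [X in _ < X](bigD1 i0) //=.
by apply: ltr_leD => //; apply: ler_sum.
Qed.

Lemma nonconst_drop w : nonincr w -> (exists i, w i != w ord0) ->
  exists2 k, (k < N)%N & wn w k.+1 < wn w k.
Proof.
move=> H [i hi].
have hlt : wn w i < wn w 0%N.
  rewrite /wn inord_val (_ : inord 0 = ord0); last by apply: val_inj; rewrite /= inordK.
  by rewrite lt_neqAle hi H.
have [k ki hk] := drop_exists (wn w) i hlt.
by exists k => //; apply: leq_trans ki _; rewrite -ltnS.
Qed.

Lemma x_sdec w : nonincr w -> (exists i, w i != w ord0) -> sdec (xalloc w).
Proof.
move=> H nc a b a0 ab b1.
rewrite -subr_lt0 !xalloc_wn -sumrB.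
under eq_bigr do rewrite -mulrBr.
rewrite (abel (wn w) (fun i => bern N i b - bern N i a)).
have -> : \sum_(i < N.+1) (bern N i b - bern N i a) = 0.
  by rewrite sumrB -/(G N N.+1 b) -/(G N N.+1 a) !G_full subrr.
rewrite mulr0 addr0.
have [k kN hk] := nonconst_drop w H nc.
rewrite [X in _ < X](_ : 0 = \sum_(i < N) (0:R)); last by rewrite big1.
apply: (@sum_lt_one _ _ _ (Ordinal kN)).
  move=> i; rewrite sumrB -/(G N i.+1 b) -/(G N i.+1 a).
  apply: mulr_ge0_le0; first by rewrite subr_ge0 (wn_nonincr w H) // ltn_ord.
  by rewrite subr_le0 G_decr // ltW.
rewrite sumrB -/(G N k.+1 b) -/(G N k.+1 a) /=.
rewrite pmulr_rlt0; last by rewrite subr_gt0.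
by rewrite subr_lt0 G_strict // ltnS ltnW.
Qed.

Lemma dominate w p M : nonincr w -> (forall i, 0 <= w i) -> 0 <= M ->
  (forall k, (1 <= k <= N.+1)%N -> G N k p <= k%:R * M) ->
  xalloc w p <= M * \sum_(i < N.+1) w i.
Proof.
move=> H w0 M0 hG.
rewrite xalloc_wn sum_wn (abel (wn w) (fun i => bern N i p)) (abel (wn w) (fun _ => 1)) mulrDr [M * (\sum_(k < N) _)]mulr_sumr.
have s1 : forall k, \sum_(i < k) (1 : R) = k%:R by move=> k; rewrite sumr_const card_ord.
apply: lerD.
  apply: ler_sum => i _; rewrite s1 mulrCA; apply: ler_wpM2l.
    by rewrite subr_ge0 (wn_nonincr w H) // ltn_ord.
  rewrite mulrC; apply: (hG i.+1); by rewrite /= ltnS ltnW.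
rewrite s1 mulrCA; apply: ler_wpM2l; first exact: w0.
rewrite mulrC; apply: (hG N.+1); by rewrite /=.
Qed.

Lemma dominate_strict w p M : nonincr w -> (forall i, 0 <= w i) -> 0 <= M ->
  (exists i, w i != w ord0) ->
  (forall k, (1 <= k <= N)%N -> G N k p < k%:R * M) ->
  G N N.+1 p <= N.+1%:R * M ->
  xalloc w p < M * \sum_(i < N.+1) w i.
Proof.
move=> H w0 M0 nc hG hN.
rewrite xalloc_wn sum_wn (abel (wn w) (fun i => bern N i p)) (abel (wn w) (fun _ => 1)) mulrDr [M * (\sum_(k < N) _)]mulr_sumr.
have s1 : forall k, \sum_(i < k) (1 : R) = k%:R by move=> k; rewrite sumr_const card_ord.
have [k kN hk] := nonconst_drop w H nc.
apply: ltr_leD.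
  apply: (@sum_lt_one _ _ _ (Ordinal kN)) => [i|].
    rewrite s1 mulrCA; apply: ler_wpM2l.
      by rewrite subr_ge0 (wn_nonincr w H) // ltn_ord.
    rewrite mulrC; apply: ltW; apply: (hG i.+1); by rewrite /= ltn_ord.
  rewrite s1 mulrCA /= ltr_pM2l; last by rewrite subr_gt0.
  rewrite mulrC; apply: (hG k.+1); by rewrite /= kN.
rewrite s1 mulrCA; apply: ler_wpM2l; first exact: w0.
by rewrite mulrC.
Qed.

End PC.
Arguments nonincr {R N}. Arguments wn {R N}.
Arguments xalloc_wn {R N}. Arguments sum_wn {R N}. Arguments wn_nonincr {R N}.
Arguments simple_x {R N}. Arguments xi_G {R N}. Arguments x_const {R N}. Arguments x_cont {R N}.
Arguments sum_lt_one {R}. Arguments nonconst_drop {R N}. Arguments x_sdec {R N}.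
Arguments dominate {R N}. Arguments dominate_strict {R N}.
Section PD.
Variable R : realType.
Implicit Types (f : R -> R).

Definition Sx f (y : \bar R) : set R := [set phi : R | (0 <= phi <= 1)%R /\ (y <= (f phi)%:E)%E].

Lemma xinvE f y : xinv f y = if ((f 0)%:E < y)%E then 0 else sup (Sx f y).
Proof. by []. Qed.

Lemma Sx_ub f y : ubound (Sx f y) 1.
Proof. by move=> z [/andP[_ ->]]. Qed.

Lemma Sx_has_sup f y : (y <= (f 0)%:E)%E -> has_sup (Sx f y).
Proof. move=> h; split; [exists 0; split=> //; by rewrite lexx ler01 | exists 1; exact: Sx_ub]. Qed.

Lemma xinv_ge f (y : \bar R) phi : 0 <= phi <= 1 -> (y <= (f phi)%:E)%E -> (y <= (f 0)%:E)%E ->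
  phi <= xinv f y.
Proof.
move=> hp h1 h0; rewrite xinvE ifF; last by apply/negbTE; rewrite -leNgt.
by apply: sup_upper_bound; [exact: Sx_has_sup | split].
Qed.

Lemma xinv_ge0 f y : 0 <= xinv f y.
Proof.
rewrite xinvE; case: ifPn => //; rewrite -leNgt => h.
by apply: sup_upper_bound; [exact: Sx_has_sup | split; rewrite ?lexx ?ler01].
Qed.

Lemma xinv_le1 f y : xinv f y <= 1.
Proof.
rewrite xinvE; case: ifPn => [_|]; first exact: ler01.
rewrite -leNgt => h; apply: ge_sup; last exact: Sx_ub.
by exists 0; split; rewrite ?lexx ?ler01.
Qed.

Lemma xinv_0 f y : ((f 0)%:E < y)%E -> xinv f y = 0.
Proof. by move=> h; rewrite xinvE h. Qed.

Lemma xinv_mono f (y1 y2 : R) : y1 <= y2 -> xinv f y2%:E <= xinv f y1%:E.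
Proof.
move=> y12; rewrite [X in X <= _]xinvE; case: ifPn => [_|]; first exact: xinv_ge0.
rewrite -leNgt => h2.
have h1 : (y1%:E <= (f 0)%:E)%E by apply: le_trans h2; rewrite lee_fin.
rewrite xinvE ifF; last by apply/negbTE; rewrite -leNgt.
apply: sup_le_ub; first by exists 0; split; rewrite ?lexx ?ler01.
move=> z [hz hz2]; apply: sup_upper_bound; first exact: Sx_has_sup.
by split => //; apply: le_trans hz2; rewrite lee_fin.
Qed.

Lemma cont_eps (f : R -> R) (x e : R) : continuous f -> 0 < e ->
  exists2 d : R, 0 < d & forall t : R, `|x - t| < d -> `|f x - f t| < e.
Proof.
move=> fc e0.
have fx : f @ x --> f x := fc x.
have := @cvgr_dist_lt _ _ _ _ _ f (f x) fx e e0.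
move=> H0; have [d /= d0 H] := (iffLR (nbhs_ballP _ _) (H0 _)).
by exists d => // t xt; apply: H.
Qed.

Lemma xinv_cont f (y : R) : continuous f -> y <= f 0 -> y <= f (xinv f y%:E).
Proof.
move=> fc y0; rewrite xinvE ifF; last by apply/negbTE; rewrite -leNgt lee_fin.
set s := sup _.
have hs : has_sup (Sx f y%:E) by apply: Sx_has_sup; rewrite lee_fin.
rewrite leNgt; apply/negP => fs.
have e0 : 0 < y - f s by rewrite subr_gt0.
have [d d0 hd] := cont_eps f s _ fc e0.
have [psi Spsi lt] := sup_adherent d0 hs.
have le : psi <= s by exact: (sup_upper_bound hs Spsi).
case: Spsi => _ hpsi.
have hsd : s - psi < d by move: lt; rewrite -/s; lra.
have := hd psi; rewrite ger0_norm ?subr_ge0 // => /(_ hsd).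
rewrite ltr_norml => /andP[h _]; rewrite lee_fin in hpsi; lra.
Qed.

Lemma xinv_lt f (y phi : R) : continuous f -> sdec f -> 0 < phi -> phi <= 1 -> f phi < y ->
  xinv f y%:E < phi.
Proof.
move=> fc fs p0 p1 fy.
have [h|h] := ltP (f 0) y; first by rewrite xinv_0 ?lte_fin.
have hc := xinv_cont f y fc h.
rewrite ltNge; apply/negP => hp.
have [e|lt] := eqVneq phi (xinv f y%:E).
  by rewrite -e in hc; lra.
have lt' : phi < xinv f y%:E by rewrite lt_neqAle lt hp.
have := fs _ _ (ltW p0) lt' (xinv_le1 f y%:E); lra.
Qed.

Lemma xinv_const f c (y : R) : (forall p, f p = c) -> y <= c -> xinv f y%:E = 1.
Proof.
move=> fc yc; apply/eqP; rewrite eq_le xinv_le1 /=.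
by apply: xinv_ge; rewrite ?lexx ?ler01 // !fc lee_fin.
Qed.

Lemma sdec_notconst f : sdec f -> ~ (forall p, f p = f 0).
Proof. by move=> fs fc; have := fs 0 1 (lexx _) ltr01 (lexx _); rewrite fc ltxx. Qed.

End PD.
Arguments xinvE {R}. Arguments xinv_ge {R}. Arguments xinv_ge0 {R}. Arguments xinv_le1 {R}.
Arguments xinv_0 {R}. Arguments xinv_mono {R}. Arguments cont_eps {R}. Arguments xinv_cont {R}.
Arguments xinv_lt {R}. Arguments xinv_const {R}. Arguments sdec_notconst {R}.
Section PE.
Variable R : realType.
Variable m : nat.
Implicit Types (X : 'I_m -> R -> R) (f g : R -> R).

Definition QX X (y : R) : R := \sum_(j' < m) xinv (X j') y%:E.
Definition QinvX X (q : R) : \bar R :=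
  ereal_sup [set y%:E | y in [set y : R | (q <= QX X y)%R]].
Definition inM1X X (j' : 'I_m) : bool :=
  ~~ `[< sdec (X j') >] && `[< forall j'' : 'I_m, ~ sdec (X j'') -> (X j'' 0 <= X j' 0)%R >].
Definition SX X (y : R) : R := \sum_(j' < m | `[< sdec (X j') >]) xinv (X j') y%:E.
Definition PhiX X j q : R :=
  if `[< sdec (X j) >] then xinv (X j) (QinvX X q)
  else if inM1X X j then
    (Num.max 0 (q - Num.min 1 (SX X (X j 0))) / (#|[pred j' : 'I_m | inM1X X j']|)%:R)%R
  else 0.

Lemma Phi_X n (W : 'I_m -> 'I_n -> R) j q : Phi W j q = PhiX (fun j' => xalloc (W j')) j q.
Proof. by []. Qed.

Definition updX X j f := fun j' => if j' == j then f else X j'.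

Lemma upd_X n (W : 'I_m -> 'I_n -> R) j w :
  (fun j' => xalloc (upd W j w j')) = updX (fun j' => xalloc (W j')) j (xalloc w).
Proof. by apply: funext => j'; rewrite /upd /updX; case: eqP. Qed.

Definition AX X j (y : R) : R := \sum_(j' < m | j' != j) xinv (X j') y%:E.

Lemma updX_j X j f : updX X j f j = f.
Proof. by rewrite /updX eqxx. Qed.

Lemma updX_o X j f j' : j' != j -> updX X j f j' = X j'.
Proof. by rewrite /updX => /negbTE ->. Qed.

Lemma QX_split X j f y : QX (updX X j f) y = xinv f y%:E + AX X j y.
Proof.
rewrite /QX (bigD1 j) //= updX_j; congr (_ + _).
by apply: eq_bigr => j' hj; rewrite updX_o.
Qed.

Lemma AX_ge0 X j y : 0 <= AX X j y.
Proof. by apply: sumr_ge0 => j' _; exact: xinv_ge0. Qed.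

Lemma AX_mono X j (y1 y2 : R) : y1 <= y2 -> AX X j y2 <= AX X j y1.
Proof. by move=> h; apply: ler_sum => j' _; exact: xinv_mono. Qed.

Lemma QX_ge_term X (y : R) j' : xinv (X j') y%:E <= QX X y.
Proof.
rewrite /QX (bigD1 j') //= lerDl; apply: sumr_ge0 => i _; exact: xinv_ge0.
Qed.

Lemma SX_ge0 X y : 0 <= SX X y.
Proof. by apply: sumr_ge0 => j' _; exact: xinv_ge0. Qed.

Lemma card_ge1 X j : inM1X X j -> (1 <= #|[pred j' : 'I_m | inM1X X j']|)%N.
Proof. by move=> h; apply/card_gt0P; exists j. Qed.

Lemma divK_le (x : R) K : 0 <= x -> (1 <= K)%N -> x / K%:R <= x.
Proof.
move=> x0 K1; rewrite ler_pdivrMr ?ltr0n //.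
by rewrite -[X in X <= _]mulr1 ler_wpM2l // ler1n.
Qed.

Lemma PhiX_ge0 X j q : 0 <= PhiX X j q.
Proof.
rewrite /PhiX; case: ifP => _; first exact: xinv_ge0.
case: ifP => // _; apply: divr_ge0; [by rewrite le_max lexx | exact: ler0n].
Qed.

Lemma PhiX_sdec X j f q : sdec f -> PhiX (updX X j f) j q = xinv f (QinvX (updX X j f) q).
Proof. by move=> h; rewrite /PhiX updX_j asboolT. Qed.

Lemma const_nsdec (c : R) : ~ sdec (fun _ : R => c).
Proof. by move=> h; have := h 0 1 (lexx _) ltr01 (lexx _); rewrite ltxx. Qed.

Definition hoth X j := forall j', j' != j -> ~ sdec (X j') -> forall p, X j' p = X j' 0.

Lemma sdec_facts X j f th : th <= 1 -> sdec f -> continuous f ->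
  0 < PhiX (updX X j f) j th ->
  exists ys : R, [/\ QinvX (updX X j f) th = ys%:E,
     ys <= f (PhiX (updX X j f) j th) &
     forall y, ys < y -> QX (updX X j f) y < th].
Proof.
move=> th1 fs fc; rewrite PhiX_sdec //; set Y := QinvX _ th => p0.
have hY0 : (Y <= (f 0)%:E)%E.
  by rewrite leNgt; apply/negP => h; move: p0; rewrite xinv_0 // ltxx.
have f10 : f 1 <= f 0 by apply: ltW; apply: fs; rewrite ?lexx ?ltr01.
have hY1 : ((f 1)%:E <= Y)%E.
  apply: ereal_sup_ubound; exists (f 1) => //=.
  rewrite QX_split; apply: le_trans th1 _.
  have -> : xinv f (f 1)%:E = 1.
    apply/eqP; rewrite eq_le xinv_le1 /=; apply: xinv_ge; rewrite ?lee_fin ?lexx ?ler01 //.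
  by rewrite lerDl AX_ge0.
have [ys Eys] : exists ys : R, Y = ys%:E.
  case E: Y => [r||]; first by exists r.
  - by move: hY0; rewrite E.
  - by move: hY1; rewrite E.
have hQ : forall y, ys < y -> QX (updX X j f) y < th.
  move=> y yl; rewrite ltNge; apply/negP => hy.
  have : (y%:E <= Y)%E by apply: ereal_sup_ubound; exists y.
  by rewrite Eys lee_fin leNgt yl.
exists ys; split => //.
have -> : xinv f Y = xinv f ys%:E by rewrite Eys.
apply: (xinv_cont f ys fc); by rewrite -lee_fin -Eys.
Qed.

Lemma sdec_core X j f th : th <= 1 -> sdec f -> continuous f ->
  0 < PhiX (updX X j f) j th ->
  forall y psi, f (PhiX (updX X j f) j th) < y -> psi < PhiX (updX X j f) j th ->
  AX X j y < th - psi.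
Proof.
move=> th1 fs fc p0 y psi fy pp.
have [ys [Eys ysf hQ]] := sdec_facts X j f th th1 fs fc p0.
move: p0 fy pp ysf; set p := PhiX _ j th => p0 fy pp ysf.
have p1 : p <= 1 by rewrite /p PhiX_sdec //; exact: xinv_le1.
have e0 : 0 < y - f p by rewrite subr_gt0.
have [d d0 hd] := cont_eps f p _ fc e0.
set lb := Num.max (Num.max psi 0) (p - d).
have lbp : lb < p by rewrite !gt_max pp p0 /=; lra.
have lb1 : psi <= lb by rewrite !le_max lexx.
have lb2 : 0 <= lb by rewrite !le_max lexx orbT.
have lb3 : p - d <= lb by rewrite le_max lexx orbT.
set q := (lb + p) / 2.
have hq1 : lb < q by rewrite /q; lra.
have hq2 : q < p by rewrite /q; lra.
have fq : f q < y.
  have hpq : `|p - q| < d by rewrite ger0_norm; lra.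
  have := hd q hpq; rewrite ltr_norml => /andP[h _]; lra.
have fqp : f p < f q by apply: fs => //; lra.
have fqy : ys < f q by lra.
have := hQ (f q) fqy; rewrite QX_split.
have hx : q <= xinv f (f q)%:E.
  apply: xinv_ge; rewrite ?lee_fin ?lexx //; first by apply/andP; split; lra.
  by apply: ltW; apply: fs => //; lra.
have hA : AX X j y <= AX X j (f q) by apply: AX_mono; lra.
lra.
Qed.


Lemma case_SS X j f g th : th <= 1 -> sdec f -> continuous f -> sdec g -> continuous g ->
  f (PhiX (updX X j f) j th) <= g (PhiX (updX X j f) j th) ->
  PhiX (updX X j f) j th <= PhiX (updX X j g) j th.
Proof.
move=> th1 fs fc gs gc.
have core := sdec_core X j f th th1 fs fc.
set p := PhiX (updX X j f) j th => fg.
have [p0|p0] := leP p 0; first by apply: le_trans p0 (PhiX_ge0 _ _ _).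
have p1 : p <= 1 by rewrite /p PhiX_sdec //; exact: xinv_le1.
have gp0 : g p <= g 0 by apply: ltW; apply: gs => //; rewrite lexx.
rewrite PhiX_sdec //.
have hQ : (QinvX (updX X j g) th <= (g p)%:E)%E.
  apply: ge_ereal_sup => z [y hy <-]; rewrite lee_fin leNgt; apply/negP => gy.
  move: hy; rewrite /= QX_split.
  have hl := xinv_lt g y p gc gs p0 p1 gy.
  have := core p0 y (xinv g y%:E); rewrite -/p => /(_ ltac:(lra) hl).
  lra.
apply: xinv_ge; first by rewrite (ltW p0) p1.
  exact: hQ.
by apply: le_trans hQ _; rewrite lee_fin.
Qed.

Lemma big_mk_le (F1 F2 : 'I_m -> R) (P1 P2 : pred 'I_m) :
  (forall i, (if P1 i then F1 i else 0) <= (if P2 i then F2 i else 0)) ->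
  \sum_(i < m | P1 i) F1 i <= \sum_(i < m | P2 i) F2 i.
Proof. by move=> h; rewrite big_mkcond [X in _ <= X]big_mkcond; apply: ler_sum. Qed.

Lemma case_SC X j f c th : th <= 1 -> hoth X j -> sdec f -> continuous f ->
  f (PhiX (updX X j f) j th) < c ->
  PhiX (updX X j f) j th <= PhiX (updX X j (fun _ => c)) j th.
Proof.
move=> th1 ho fs fc.
have core := sdec_core X j f th th1 fs fc.
set p := PhiX (updX X j f) j th => fpc.
have [p0|p0] := leP p 0; first by apply: le_trans p0 (PhiX_ge0 _ _ _).
have [ys [Eys ysf hQ]] := sdec_facts X j f th th1 fs fc p0.
rewrite -/p in ysf.
set X2 := updX X j (fun _ => c).
have K : forall j', j' != j -> ~ sdec (X j') -> X j' 0 <= ys.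
  move=> j' hj ns; rewrite leNgt; apply/negP => hl.
  have := hQ _ hl; apply/negP; rewrite -leNgt.
  apply: le_trans (QX_ge_term _ _ j').
  rewrite updX_o // (xinv_const _ (X j' 0)) //; exact: ho.
have nsg := const_nsdec c.
have X2j : X2 j = (fun _ => c) by rewrite /X2 updX_j.
have inj : inM1X X2 j.
  rewrite /inM1X X2j asboolF //=; apply/asboolP => j'' ns.
  have [->|hj] := eqVneq j'' j; first by rewrite /X2 updX_j.
  move: ns; rewrite /X2 updX_o // => ns.
  by apply: le_trans (K _ hj ns) _; lra.
have card1 : #|[pred j' : 'I_m | inM1X X2 j']| = 1%N.
  rewrite -(card1 j); apply: eq_card => j'; rewrite !inE.
  have [->|hj] := eqVneq j' j; first by rewrite inj.
  apply/negbTE; rewrite /inM1X negb_and; apply/orP.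
  case: (asboolP (sdec (X2 j'))) => [//|ns]; first by left.
  right; apply/asboolP => h; have := h j; rewrite X2j => /(_ nsg).
  move: ns; rewrite /X2 updX_o // => ns; have := K _ hj ns; lra.
rewrite /PhiX asboolF X2j //= inj card1 divr1.
set S := SX _ _.
have SA : S <= AX X j c.
  apply: big_mk_le => i.
  case: (asboolP (sdec (X2 i))) => [si|_]; last first.
    case: ifP => _; [exact: xinv_ge0 | exact: lexx].
  have hi : i != j by apply/eqP => e; rewrite e X2j in si; exact: nsg.
  by rewrite hi /X2 updX_o.
have Ac : AX X j c <= th - p.
  rewrite leNgt; apply/negP => h.
  have := core p0 c (th - AX X j c) fpc; rewrite -/p => /(_ ltac:(lra)); lra.
have hmin : Num.min 1 S <= S by rewrite ge_min lexx orbT.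
by rewrite le_max; apply/orP; right; lra.
Qed.

Lemma min_mono (a b c : R) : a <= b -> Num.min c a <= Num.min c b.
Proof. by move=> ab; rewrite le_min !ge_min lexx ab /= orbT. Qed.

Lemma max_mono (a b c : R) : a <= b -> Num.max c a <= Num.max c b.
Proof. by move=> ab; rewrite ge_max !le_max lexx ab /= orbT. Qed.

Lemma case_CS X j a g th : 0 <= th <= 1 -> sdec g -> continuous g ->
  a <= g (PhiX (updX X j (fun _ => a)) j th) ->
  PhiX (updX X j (fun _ => a)) j th <= PhiX (updX X j g) j th.
Proof.
move=> /andP[th0 th1] gs gc.
set X1 := updX X j (fun _ => a).
set p := PhiX X1 j th => ag.
have [p0|p0] := leP p 0; first by apply: le_trans p0 (PhiX_ge0 _ _ _).
have nsa := const_nsdec a.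
have X1j : X1 j = (fun _ => a) by rewrite /X1 updX_j.
have Ep : p = if inM1X X1 j then Num.max 0 (th - Num.min 1 (SX X1 a)) /
   (#|[pred j' | inM1X X1 j']|)%:R else 0.
  by rewrite /p /PhiX X1j asboolF.
move: p0 ag; rewrite Ep.
case: ifPn => inj; last by rewrite ltxx.
set S := SX _ _; set K := #|_|.
have K1 : (1 <= K)%N by exact: (card_ge1 X1 j inj).
have S0 : 0 <= S by apply: SX_ge0.
set p' := _ / _ => p0 ag.
have pm : p' <= Num.max 0 (th - Num.min 1 S) by apply: divK_le => //; rewrite le_max lexx.
have pS : p' <= th - S /\ S < 1.
  move: pm; case: (leP 1 S) => [S1|S1].
    have -> : Num.max 0 (th - 1) = 0 by apply/max_idPl; lra.
    lra.
  by rewrite le_max => /orP[] h; split => //; lra.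
case: pS => pS S1.
have p1 : p' <= 1 by lra.
have gp0 : g p' <= g 0 by apply: ltW; apply: gs => //; rewrite lexx.
rewrite PhiX_sdec //.
have hQ : (QinvX (updX X j g) th <= (g p')%:E)%E.
  apply: ge_ereal_sup => z [y hy <-]; rewrite lee_fin leNgt; apply/negP => gy.
  move: hy; rewrite /= QX_split.
  have hl := xinv_lt g y p' gc gs p0 p1 gy.
  have hA : AX X j y <= S.
    apply: big_mk_le => i.
    have [->|hi] := eqVneq i j; first by rewrite /=; case: ifP => _; [exact: xinv_ge0|exact: lexx].
    rewrite /X1 updX_o //.
    case: (asboolP (sdec (X i))) => [si|ns]; first by apply: xinv_mono; lra.
    rewrite xinv_0 // lte_fin.
    move: inj; rewrite /inM1X => /andP[_ /asboolP h].
    have := h i; rewrite X1j /X1 updX_o // => /(_ ns) hh; lra.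
  lra.
apply: xinv_ge; first by rewrite (ltW p0) p1.
  exact: hQ.
by apply: le_trans hQ _; rewrite lee_fin.
Qed.

Lemma case_CC X j a c th : a <= c ->
  PhiX (updX X j (fun _ => a)) j th <= PhiX (updX X j (fun _ => c)) j th.
Proof.
move=> ac.
have [e|ne] := eqVneq a c; first by rewrite e.
have lt : a < c by rewrite lt_neqAle ne ac.
set X1 := updX X j (fun _ => a); set X2 := updX X j (fun _ => c).
have nsa := const_nsdec a; have nsc := const_nsdec c.
have X1j : X1 j = (fun _ => a) by rewrite /X1 updX_j.
have X2j : X2 j = (fun _ => c) by rewrite /X2 updX_j.
rewrite {1}/PhiX X1j asboolF //=.
case: ifPn => inj; last exact: PhiX_ge0.
have K1 : (1 <= #|[pred j' : 'I_m | inM1X X1 j']|)%N by exact: (card_ge1 X1 j inj).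
move: (inj); rewrite {1}/inM1X => /andP[_ /asboolP h1].
have h1' : forall j'', j'' != j -> ~ sdec (X j'') -> X j'' 0 <= a.
  by move=> j'' hj ns; have := h1 j''; rewrite /X1 updX_o // updX_j => /(_ ns).
have inj2 : inM1X X2 j.
  rewrite /inM1X X2j asboolF //=; apply/asboolP => j'' ns.
  have [->|hj] := eqVneq j'' j; first by rewrite /X2 updX_j.
  move: ns; rewrite /X2 updX_o // => ns.
  by have := h1' _ hj ns; lra.
have card1 : #|[pred j' : 'I_m | inM1X X2 j']| = 1%N.
  rewrite -(card1 j); apply: eq_card => j'; rewrite !inE.
  have [->|hj] := eqVneq j' j; first by rewrite inj2.
  apply/negbTE; rewrite /inM1X negb_and; apply/orP.
  case: (asboolP (sdec (X2 j'))) => [//|ns]; first by left.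
  right; apply/asboolP => h; have := h j; rewrite X2j => /(_ nsc).
  move: ns; rewrite /X2 updX_o // => ns; have := h1' _ hj ns; lra.
rewrite /PhiX X2j asboolF //= inj2 card1 divr1.
apply: le_trans (divK_le _ _ _ K1) _; first by rewrite le_max lexx.
apply: max_mono; rewrite lerD2l lerN2; apply: min_mono.
apply: big_mk_le => i.
have [->|hi] := eqVneq i j; first by rewrite X1j X2j !asboolF.
rewrite /X1 /X2 !updX_o //.
case: ifP => _; [by apply: xinv_mono | exact: lexx].
Qed.

End PE.
Arguments QX {R m}. Arguments QinvX {R m}. Arguments inM1X {R m}. Arguments SX {R m}.
Arguments PhiX {R m}. Arguments updX {R m}. Arguments AX {R m}. Arguments hoth {R m}.
Arguments Phi_X {R m}. Arguments upd_X {R m}. Arguments PhiX_ge0 {R m}.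
Arguments case_SS {R m}. Arguments case_SC {R m}. Arguments case_CS {R m}. Arguments case_CC {R m}.
Lemma argmax_nat (R : realType) (F : nat -> R) K : (1 <= K)%N ->
  exists k, (1 <= k <= K)%N /\ forall k', (1 <= k' <= K)%N -> F k' <= F k.
Proof.
elim: K => [//|K IH] _.
case: K IH => [|K] IH.
  by exists 1%N; split => // k' /andP[h1 h2]; have -> : k' = 1%N by apply/eqP; rewrite eqn_leq h1 h2.
have [k [hk hmax]] := IH isT.
have [le|lt] := leP (F K.+2) (F k).
  exists k; split; first by case/andP: hk => -> /= h; rewrite ltnW.
  move=> k' /andP[h1 h2]; rewrite leq_eqVlt in h2; case/orP: h2 => [/eqP->//|h2].
  by apply: hmax; rewrite h1 -ltnS.
exists K.+2; split; first by rewrite leqnn.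
move=> k' /andP[h1 h2]; rewrite leq_eqVlt in h2; case/orP: h2 => [/eqP->//|h2].
by apply: le_trans (hmax _ _) (ltW lt); rewrite h1 -ltnS.
Qed.

Section Main.
Variable R : realType.
Variable m N : nat.
Let n := N.+2.
Variable T : 'I_m -> R.
Variable W : 'I_m -> 'I_n -> R.
Variable j : 'I_m.
Variable th : R.
Hypothesis th01 : 0 <= th <= 1.
Hypothesis Tj0 : 0 < T j.
Hypothesis feas : forall j' : 'I_m, j' != j -> feasible (T j') (W j').

Let X := fun j' => xalloc (W j').
Let Tj := T j.
Let Phw (w : 'I_n -> R) := PhiX (updX X j (xalloc w)) j th.
Let Phk k := Phw (simple n Tj k).

Lemma feas_nonincr T0 (w : 'I_n -> R) : feasible T0 w -> nonincr w.
Proof. by case. Qed.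

Lemma const_or_sdec (w : 'I_n -> R) : nonincr w ->
  (forall i, w i = w ord0) \/ sdec (xalloc w).
Proof.
move=> H; have [h|h] := boolP [forall i, w i == w ord0].
  by left => i; apply/eqP; move/forallP: h.
right; apply: x_sdec => //; move/forallPn: h => [i hi]; by exists i.
Qed.

Lemma hothX : hoth X j.
Proof.
move=> j' hj ns p.
have [h|h] := const_or_sdec (W j') (feas_nonincr _ _ (feas j' hj)); last by [].
by rewrite /X !(x_const _ _ h).
Qed.

Lemma simple_sdec k : (1 <= k <= N.+1)%N -> sdec (xalloc (simple n Tj k)).
Proof.
move=> /andP[k1 kN]; apply: x_sdec.
  move=> i k' ik; rewrite /simple; case: ifP => hk'.
    by rewrite (leq_ltn_trans ik hk') lexx.
  case: ifP => _ //; apply: divr_ge0; [exact: ltW | exact: ler0n].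
exists ord_max; rewrite /simple /= ltnNge kN /= (leq_trans _ k1) //.
by rewrite eq_sym mulf_neq0 // ?invr_eq0 ?pnatr_eq0 -?lt0n ?(gt_eqF Tj0) // (leq_trans _ k1).
Qed.

Lemma simple_n : xalloc (simple n Tj n) = (fun _ => Tj / n%:R).
Proof. by apply: funext => p; apply: x_const => i; rewrite /simple ltn_ord. Qed.

Lemma x_simple_xi k (p : R) : (k <= n)%N -> xalloc (simple n Tj k) p = Tj * xi n k p.
Proof. by move=> kn; rewrite simple_x // xi_G // mulrA. Qed.

Lemma xi_n (p : R) : xi n n p = n%:R^-1.
Proof. by rewrite xi_G // G_full mulr1. Qed.

Lemma G_xi k (p : R) : (1 <= k <= n)%N -> G N.+1 k p = k%:R * xi n k p.
Proof.
move=> /andP[k1 kn]; rewrite xi_G // mulrA divff ?mul1r //.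
by rewrite pnatr_eq0 -lt0n.
Qed.

Lemma Phk_n : Phk n = PhiX (updX X j (fun _ => Tj / n%:R)) j th.
Proof. by rewrite /Phk /Phw simple_n. Qed.

Lemma n_gt0 : (0 < n%:R :> R). Proof. by rewrite ltr0n. Qed.

Lemma from_sdec (w : 'I_n -> R) k :
  sdec (xalloc w) -> (1 <= k <= n)%N ->
  ((k <= N.+1)%N -> xalloc w (Phw w) <= Tj * xi n k (Phw w)) ->
  (k = n -> xalloc w (Phw w) < Tj / n%:R) ->
  Phw w <= Phk k.
Proof.
move=> fs /andP[k1 kn].
rewrite /Phk /Phw => h1 h2.
have th1 : th <= 1 by case/andP: th01.
rewrite leq_eqVlt in kn; case/orP: kn => [/eqP ek|kn].
  rewrite ek simple_n.
  exact: (case_SC X j (xalloc w) (Tj / n%:R) th th1 hothX fs (x_cont _) (h2 ek)).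
have ss := simple_sdec k; rewrite k1 -ltnS kn in ss.
have h1' := h1 kn; rewrite -(x_simple_xi k) in h1'; last exact: ltnW.
exact: (case_SS X j (xalloc w) (xalloc (simple n Tj k)) th th1 fs (x_cont _) (ss isT) (x_cont _) h1').
Qed.

Lemma from_const (a : R) k :
  (1 <= k <= n)%N ->
  ((k <= N.+1)%N -> a <= Tj * xi n k (PhiX (updX X j (fun _ => a)) j th)) ->
  (k = n -> a <= Tj / n%:R) ->
  PhiX (updX X j (fun _ => a)) j th <= Phk k.
Proof.
move=> /andP[k1 kn] h1 h2; rewrite /Phk /Phw.
rewrite leq_eqVlt in kn; case/orP: kn => [/eqP ek|kn].
  rewrite ek simple_n; exact: (case_CC X j a (Tj / n%:R) th (h2 ek)).
have ss := simple_sdec k; rewrite k1 -ltnS kn in ss.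
have h1' := h1 kn; rewrite -(x_simple_xi k) in h1'; last exact: ltnW.
exact: (case_CS X j a (xalloc (simple n Tj k)) th th01 (ss isT) (x_cont _) h1').
Qed.

Lemma main_res : exists kstar : nat,
  [/\ (1 <= kstar <= n)%N,
      (forall w : 'I_n -> R, feasible Tj w -> Phw w <= Phk kstar) &
      (forall k : nat, (1 <= k <= n)%N -> xi n k (Phk kstar) <= xi n kstar (Phk kstar))].
Proof.
have [k1 [hk1 max1]] := argmax_nat _ Phk n (isT : (1 <= n)%N).
set ps := Phk k1.
have [k' [hk' max']] := argmax_nat _ (fun k => xi n k ps) N.+1 (isT : (1 <= N.+1)%N).
set k2 := if xi n n ps <= xi n k' ps then k' else n.
have hk2 : (1 <= k2 <= n)%N.
  rewrite /k2; case: ifP => _; last by rewrite /n leqnn.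
  case/andP: hk' => h0 h; rewrite h0 /=; exact: ltnW.
have xmax : forall k, (1 <= k <= n)%N -> xi n k ps <= xi n k2 ps.
  move=> k /andP[k1' kn]; rewrite /k2; case: ifPn => hc.
    rewrite leq_eqVlt in kn; case/orP: kn => [/eqP->//|kn].
    by apply: max'; rewrite k1' -ltnS.
  rewrite -ltNge in hc.
  rewrite leq_eqVlt in kn; case/orP: kn => [/eqP->//|kn].
  apply: le_trans (ltW hc); by apply: max'; rewrite k1' -ltnS.
have Tj0' : 0 <= Tj by exact: ltW.
have ge : ps <= Phk k2.
  case/andP: hk1 => k1a k1b.
  rewrite leq_eqVlt in k1b; case/orP: k1b => [/eqP ek1|k1n].
  - have eps : ps = PhiX (updX X j (fun _ => Tj / n%:R)) j th by rewrite /ps ek1 Phk_n.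
    rewrite eps; apply: (from_const _ _ hk2) => [kN|_]; last exact: lexx.
    rewrite -eps -(xi_n ps); apply: ler_wpM2l => //; apply: xmax.
    by rewrite /n leqnn.
  - have s1 : sdec (xalloc (simple n Tj k1)) by apply: simple_sdec; rewrite k1a -ltnS.
    have eq1 : Phw (simple n Tj k1) = ps by [].
    apply: (from_sdec _ _ s1 hk2) => [kN|e2]; rewrite eq1 (x_simple_xi k1 ps (ltnW k1n)).
      apply: ler_wpM2l => //; apply: xmax; by rewrite k1a ltnW.
    rewrite -(xi_n ps) ltr_pM2l; last exact: Tj0.
    move: e2; rewrite /k2; case: ifPn => hc ek.
      by move: hk'; rewrite ek /n ltnn andbF.
    rewrite -ltNge in hc; apply: le_lt_trans hc; apply: max'.
    by rewrite k1a -ltnS.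
have eq2 : Phk k2 = ps.
  apply/eqP; rewrite eq_le ge andbT; exact: max1.
exists k2; split; first exact: hk2; last by rewrite eq2.
move=> w fw; rewrite eq2.
have wni := feas_nonincr _ _ fw.
case: (fw) => _ [w0 sw].
have [hc|hs] := const_or_sdec w wni.
  have xw : xalloc w = (fun _ => w ord0) by apply: funext => p; exact: x_const.
  have -> : Phw w = PhiX (updX X j (fun _ => w ord0)) j th by rewrite /Phw xw.
  apply: le_trans (max1 n _); last by rewrite /n leqnn.
  apply: (from_const (w ord0) n) => [|kN|_]; first by rewrite /n leqnn.
    by move: kN; rewrite /n ltnn.
  have hsum : \sum_(i < n) w i = n%:R * w ord0.
    have -> : \sum_(i < n) w i = \sum_(i < n) w ord0 by apply: eq_bigr => i _; exact: hc.
    by rewrite sumr_const card_ord mulr_natl.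
  rewrite ler_pdivlMr; last exact: n_gt0.
  by rewrite mulrC -hsum.
have [k'' [hk'' max'']] := argmax_nat _ (fun k => xi n k (Phw w)) N.+1 (isT : (1 <= N.+1)%N).
have [hc|hc] := leP (xi n n (Phw w)) (xi n k'' (Phw w)).
  have hk''n : (1 <= k'' <= n)%N by case/andP: hk'' => h0 h; rewrite h0 ltnW.
  apply: le_trans (max1 k'' hk''n).
  apply: (from_sdec _ _ hs hk''n) => [_|e]; last first.
    by move: hk''; rewrite e /n ltnn andbF.
  have M0 : 0 <= xi n k'' (Phw w) by apply: le_trans hc; rewrite xi_n invr_ge0 ler0n.
  apply: le_trans (dominate w (Phw w) (xi n k'' (Phw w)) wni w0 M0 _) _.
    move=> k /andP[ka kb]; rewrite (G_xi k (Phw w)); last by rewrite ka.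
    apply: ler_wpM2l; first exact: ler0n.
    rewrite leq_eqVlt in kb; case/orP: kb => [/eqP->//|kb].
    by apply: max''; rewrite ka -ltnS.
  rewrite [Tj * _]mulrC; apply: ler_wpM2l => //.
apply: le_trans (max1 n _); last by rewrite /n leqnn.
apply: (from_sdec _ _ hs) => [|kN|_]; first by rewrite /n leqnn.
  by move: kN; rewrite /n ltnn.
have nc : exists i, w i != w ord0.
  apply/existsP; apply/negP => /forallP h.
  have hw : forall i, w i = w ord0 by move=> i; apply/eqP; apply: h.
  by apply: (sdec_notconst _ hs) => p; rewrite !(x_const w (w ord0) hw).
have H1 : 0 <= n%:R^-1 :> R by rewrite invr_ge0 ler0n.
have H2 : forall k, (1 <= k <= N.+1)%N -> G N.+1 k (Phw w) < k%:R * n%:R^-1.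
  move=> k /andP[ka kb]; rewrite (G_xi k (Phw w)); last by rewrite ka (leq_trans kb).
  rewrite ltr_pM2l; last by rewrite ltr0n.
  rewrite -(xi_n (Phw w)); apply: le_lt_trans hc; apply: max''; by rewrite ka.
have H3 : G N.+1 N.+2 (Phw w) <= N.+2%:R * n%:R^-1 by rewrite G_full mulfV // pnatr_eq0.
have hlt := dominate_strict w (Phw w) (n%:R^-1) wni w0 H1 nc H2 H3.
apply: lt_le_trans hlt _.
rewrite [Tj / _]mulrC; apply: ler_wpM2l => //.
Qed.

End Main.
Theorem theorem4 (R : realType) (m n : nat) (T : 'I_m -> R)
  (W : 'I_m -> 'I_n -> R) (j : 'I_m) (theta : R) :
  (2 <= n)%N ->
  0 <= theta <= 1 ->
  0 < T j ->
  (forall j' : 'I_m, j' != j -> feasible (T j') (W j')) ->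
  exists kstar : nat,
    [/\ (1 <= kstar <= n)%N,
        (forall w : 'I_n -> R, feasible (T j) w ->
           Rhat (upd W j w) j theta <= Rhat (upd W j (simple n (T j) kstar)) j theta) &
        (forall k : nat, (1 <= k <= n)%N ->
           xi n k (Phi (upd W j (simple n (T j) kstar)) j theta)
           <= xi n kstar (Phi (upd W j (simple n (T j) kstar)) j theta))].
Proof.
move=> n2 th01 Tj0 feas.
case: n W n2 feas => [|[|N]] W n2 feas //.
have [k [hk h1 h2]] := main_res R m N T W j theta th01 Tj0 feas.
exists k; split => //.
  move=> w fw; rewrite /Rhat !Phi_X !upd_X; apply: ler_wpM2l; [exact: ler0n | exact: h1].
move=> k' hk'; rewrite !Phi_X !upd_X; exact: h2.
Qed.
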